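(* Fix $a\in[0,\infty)$. For a function $O:[0,1]^2\to[0,1]$ the following are equivalent: (1) There exist a continuous and strictly decreasing function $\theta:[0,1]\to[0,\infty]$ and a continuous and decreasing function $\vartheta:[0,\infty]\to[0,1]$ such that $O(x,y)=\vartheta(\theta(x)+\theta(y))$ for all $x,y$, $O$ is an overlap function, and at least one of the following holds: (a) $\theta(x)=\frac{a}{2}$ if and only if $x=1$; (b) $\vartheta(x)=1$ if and only if $x\in[0,a]$. (2) $O$ is an overlap function and there exist a pseudo automorphism $\mathcal{F}$ and a strict t-norm $T$ with $O(x,y)=\mathcal{F}(T(x,y))$ for all $(x,y)\in[0,1]^2$. (3) There exist a strictly increasing bijection $\varphi:[0,1]\to[0,1]$ and a pseudo automorphism $\mathcal{H}$ such that $O(x,y)=\mathcal{H}(\varphi(x)\varphi(y))$ for all $(x,y)\in[0,1]^2$.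
   Context: ''Decreasing'' means non-increasing and ''increasing'' means non-decreasing. Arithmetic in $[0,\infty]$ uses $c+\infty=\infty$; continuity on $[0,\infty]$ refers to the usual topology of the extended half-line. An overlap function is a map $O:[0,1]^2\to[0,1]$ that is (O1) commutative, (O2) $O(x,y)=0$ iff $xy=0$, (O3) $O(x,y)=1$ iff $xy=1$, (O4) increasing in each variable, (O5) continuous. A pseudo automorphism is a continuous increasing map $\mathcal{F}:[0,1]\to[0,1]$ with $\mathcal{F}(x)=1$ iff $x=1$ and $\mathcal{F}(x)=0$ iff $x=0$. A t-norm is a commutative, associative map $T:[0,1]^2\to[0,1]$, increasing in each variable, with $T(x,1)=x$; it is strict if it is continuous and strictly increasing on $(0,1]^2$ (i.e. $T(x,y)<T(x',y)$ whenever $y>0$ and $x<x'$). *)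

(* Defs.v *)
(* Functions on [0,1] are total functions R -> R whose behaviour is only
   constrained on [0,1]; [0,oo] is the subset [set x | 0 <= x] of \bar R. *)
From HB Require Import structures.
From mathcomp Require Import all_boot all_order all_algebra.
From mathcomp Require Import all_classical all_reals all_analysis.
Set Implicit Arguments. Unset Strict Implicit. Unset Printing Implicit Defensive.
Import Order.TTheory GRing.Theory Num.Theory.
Import numFieldNormedType.Exports.
Local Open Scope classical_set_scope.
Local Open Scope ring_scope.

Definition unit_I {R : realType} : set R := `[0, 1]%classic.

Definition unit_sq {R : realType} : set (R * R) :=
  [set p | p.1 \in `[0, 1] /\ p.2 \in `[0, 1]].

Definition ext_half {R : realType} : set (\bar R) := [set x | (0 <= x)%E].

Definition overlap {R : realType} (O : R -> R -> R) : Prop :=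
  (forall x y, x \in `[0, 1] -> y \in `[0, 1] -> O x y \in `[0, 1]) /\
  (forall x y, x \in `[0, 1] -> y \in `[0, 1] -> O x y = O y x) /\
  (forall x y, x \in `[0, 1] -> y \in `[0, 1] -> (O x y = 0 <-> x * y = 0)) /\
  (forall x y, x \in `[0, 1] -> y \in `[0, 1] -> (O x y = 1 <-> x * y = 1)) /\
  (forall x x' y, x \in `[0, 1] -> x' \in `[0, 1] -> y \in `[0, 1] ->
     x <= x' -> O x y <= O x' y /\ O y x <= O y x') /\
  {within unit_sq, continuous (fun p : R * R => O p.1 p.2)}.

Definition pseudo_automorphism {R : realType} (F : R -> R) : Prop :=
  (forall x, x \in `[0, 1] -> F x \in `[0, 1]) /\
  {within unit_I, continuous F} /\
  (forall x y, x \in `[0, 1] -> y \in `[0, 1] -> x <= y -> F x <= F y) /\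
  (forall x, x \in `[0, 1] -> (F x = 1 <-> x = 1)) /\
  (forall x, x \in `[0, 1] -> (F x = 0 <-> x = 0)).

Definition tnorm {R : realType} (T : R -> R -> R) : Prop :=
  (forall x y, x \in `[0, 1] -> y \in `[0, 1] -> T x y \in `[0, 1]) /\
  (forall x y, x \in `[0, 1] -> y \in `[0, 1] -> T x y = T y x) /\
  (forall x y z, x \in `[0, 1] -> y \in `[0, 1] -> z \in `[0, 1] ->
     T x (T y z) = T (T x y) z) /\
  (forall x x' y, x \in `[0, 1] -> x' \in `[0, 1] -> y \in `[0, 1] ->
     x <= x' -> T x y <= T x' y /\ T y x <= T y x') /\
  (forall x, x \in `[0, 1] -> T x 1 = x).

Definition strict_tnorm {R : realType} (T : R -> R -> R) : Prop :=
  tnorm T /\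
  {within unit_sq, continuous (fun p : R * R => T p.1 p.2)} /\
  (forall x x' y, x \in `[0, 1] -> x' \in `[0, 1] -> y \in `[0, 1] ->
     0 < y -> x < x' -> T x y < T x' y).

Definition incr_bij01 {R : realType} (phi : R -> R) : Prop :=
  (forall x, x \in `[0, 1] -> phi x \in `[0, 1]) /\
  (forall x y, x \in `[0, 1] -> y \in `[0, 1] -> x < y -> phi x < phi y) /\
  (forall z, z \in `[0, 1] -> exists2 x, x \in `[0, 1] & phi x = z).

(* Main.v *)
Require Import Defs.
From HB Require Import structures.
From mathcomp Require Import all_boot all_order all_algebra.
From mathcomp Require Import all_classical all_reals all_analysis.
From mathcomp Require Import ring lra.
Import Order.TTheory GRing.Theory Num.Theory.
Import numFieldNormedType.Exports.
Local Open Scope classical_set_scope.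
Local Open Scope ring_scope.

Set Implicit Arguments. Unset Strict Implicit. Unset Printing Implicit Defensive.

Section L0a.
Variable R : realType.

Lemma wR_ed (A : set R) (f : R -> R) : {within A, continuous f} ->
  forall x, A x -> forall e, 0 < e -> exists2 d, 0 < d &
    forall y, A y -> `|x - y| < d -> `|f x - f y| < e.
Proof.
move=> /subspace_continuousP fc x Ax e e0.
have := fc x Ax; move=> /cvgrPdist_lt /(_ e e0).
rewrite near_withinE => /nbhs_ballP [d /= d0 Hd].
exists d => // y Ay xy; apply: (Hd y) => //.
Qed.

Lemma ed_wR (A : set R) (f : R -> R) :
  (forall x, A x -> forall e, 0 < e -> exists2 d, 0 < d &
    forall y, A y -> `|x - y| < d -> `|f x - f y| < e) -> {within A, continuous f}.
Proof.
move=> H; apply/subspace_continuousP => x Ax.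
apply/cvgrPdist_lt => e e0; rewrite near_withinE.
have [d d0 Hd] := H x Ax e e0.
apply/nbhs_ballP; exists d => //= y xy Ay; exact: Hd.
Qed.

Lemma wR2_ed (A : set (R * R)) (f : R * R -> R) : {within A, continuous f} ->
  forall x, A x -> forall e, 0 < e -> exists2 d, 0 < d &
    forall y, A y -> `|x.1 - y.1| < d -> `|x.2 - y.2| < d -> `|f x - f y| < e.
Proof.
move=> /subspace_continuousP fc x Ax e e0.
have := fc x Ax; move=> /cvgrPdist_lt /(_ e e0).
rewrite near_withinE => /nbhs_ballP [d /= d0 Hd].
exists d => // y Ay xy1 xy2; apply: (Hd y) => //.

Qed.

Lemma ed_wR2 (A : set (R * R)) (f : R * R -> R) :
  (forall x, A x -> forall e, 0 < e -> exists2 d, 0 < d &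
    forall y, A y -> `|x.1 - y.1| < d -> `|x.2 - y.2| < d -> `|f x - f y| < e) ->
  {within A, continuous f}.
Proof.
move=> H; apply/subspace_continuousP => x Ax.
apply/cvgrPdist_lt => e e0; rewrite near_withinE.
have [d d0 Hd] := H x Ax e e0.
apply/nbhs_ballP; exists d => //= y [xy1 xy2] Ay; exact: Hd.
Qed.
End L0a.
Section L0b.
Variable R : realType.

Lemma wE_fin (A : set R) (f : R -> \bar R) : {within A, continuous f} ->
  forall x r, A x -> f x = r%:E -> forall e, (0 < e)%R -> exists2 d, (0 < d)%R &
    forall y, A y -> `|x - y| < d -> exists2 s, f y = s%:E & `|r - s| < e.
Proof.
move=> /subspace_continuousP fc x r Ax fxr e e0.
have : f @ within A (nbhs x) --> f x := fc x Ax; rewrite fxr => /fine_cvgP [Hfin /cvgrPdist_lt /(_ e e0) Hc].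
rewrite near_withinE in Hfin; rewrite near_withinE in Hc.
move: Hfin Hc => /nbhs_ballP [d1 /= d10 H1] /nbhs_ballP [d2 /= d20 H2].
exists (Num.min d1 d2); first by rewrite lt_min d10 d20.
move=> y Ay; rewrite lt_min => /andP [y1 y2].
by exists (fine (f y)); [rewrite fineK //; exact: H1 | exact: H2].
Qed.

Lemma wE_inf (A : set R) (f : R -> \bar R) : {within A, continuous f} ->
  forall x, A x -> f x = +oo%E -> forall M, exists2 d, (0 < d)%R &
    forall y, A y -> `|x - y| < d -> (M%:E <= f y)%E.
Proof.
move=> /subspace_continuousP fc x Ax fxr M.
have : f @ within A (nbhs x) --> f x := fc x Ax; rewrite fxr => /cvgeyPge /(_ M).
rewrite near_withinE => /nbhs_ballP [d /= d0 Hd].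
exists d => // y Ay xy.
exact: Hd.
Qed.

Lemma ed_wE (A : set R) (f : R -> \bar R) :
  (forall x, A x -> f x != -oo%E) ->
  (forall x r, A x -> f x = r%:E -> forall e, (0 < e)%R -> exists2 d, (0 < d)%R &
    forall y, A y -> `|x - y| < d -> exists2 s, f y = s%:E & `|r - s| < e) ->
  (forall x, A x -> f x = +oo%E -> forall M, exists2 d, (0 < d)%R &
    forall y, A y -> `|x - y| < d -> (M%:E <= f y)%E) ->
  {within A, continuous f}.
Proof.
move=> Hn Hf Hi; apply/subspace_continuousP => x Ax; change (f @ within A (nbhs x) --> f x).
case E: (f x) => [r| |].
- apply/fine_cvgP; split.
    rewrite near_withinE; have [d d0 Hd] := Hf x r Ax E 1%R ltr01.
    apply/nbhs_ballP; exists d => //= y xy Ay.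
    by have [s -> _] := Hd y Ay xy.
  apply/cvgrPdist_lt => e e0; rewrite near_withinE.
  have [d d0 Hd] := Hf x r Ax E e e0.
  apply/nbhs_ballP; exists d => //= y xy Ay.
  by have [s -> ?] := Hd y Ay xy.
- apply/cvgeyPge => M; rewrite near_withinE.
  have [d d0 Hd] := Hi x Ax E M.
  apply/nbhs_ballP; exists d => //= y xy Ay; exact: Hd.
- by have := Hn x Ax; rewrite E.
Qed.

Lemma ed_wEv (f : \bar R -> R) :
  (forall e, (0 < e)%R -> exists M : R, forall v, (0 <= v)%E -> (M%:E < v)%E ->
      `|f +oo%E - f v| < e) ->
  (forall r, (0 <= r)%R -> forall e, (0 < e)%R -> exists2 d, (0 < d)%R &
    forall s, (0 <= s)%R -> `|r - s| < d -> `|f r%:E - f s%:E| < e) ->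
  {within [set x | (0 <= x)%E], continuous f}.
Proof.
move=> Hi Hf; apply/subspace_continuousP => x /= x0.
case: x x0 => [r| |] x0.
- apply/cvgrPdist_lt => e e0; rewrite near_withinE.
  have [d d0 Hd] := Hf r x0 e e0.
  suff : nbhs r (fun s : R => (0 <= s%:E)%E -> `|f r%:E - f s%:E| < e) by []. apply/nbhs_ballP; exists d => //= y xy Ay; apply: Hd => //; by rewrite -lee_fin.
- apply/cvgrPdist_lt => e e0; rewrite near_withinE.
  have [M HM] := Hi e e0.
  exists M; split; first exact: num_real.
  move=> y My y0; exact: HM.
- by [].
Qed.
End L0b.

Section L1.
Context {R : realType}.
Implicit Types phi : R -> R.

Lemma bij_lt phi : incr_bij01 phi -> forall x y, x \in `[0, 1] -> y \in `[0, 1] ->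
  (phi x < phi y) = (x < y).
Proof.
move=> [Hin [Hlt _]] x y xI yI.
case: (ltgtP x y) => [xy|yx|->]; first exact: Hlt.
- by apply/negbTE; rewrite -leNgt ltW // Hlt.
- by rewrite ltxx.
Qed.

Lemma bij_le phi : incr_bij01 phi -> forall x y, x \in `[0, 1] -> y \in `[0, 1] ->
  (phi x <= phi y) = (x <= y).
Proof.
move=> H x y xI yI; by rewrite !leNgt bij_lt.
Qed.

Lemma bij_inj phi : incr_bij01 phi -> forall x y, x \in `[0, 1] -> y \in `[0, 1] ->
  phi x = phi y -> x = y.
Proof.
move=> H x y xI yI e; apply/eqP; rewrite eq_le -(bij_le H xI yI) -(bij_le H yI xI) e lexx. by [].
Qed.

Lemma I0 : (0:R) \in `[0, 1]. Proof. by rewrite in_itv /= lexx ler01. Qed.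
Lemma I1 : (1:R) \in `[0, 1]. Proof. by rewrite in_itv /= lexx ler01. Qed.

Lemma I_ge0 (x : R) : x \in `[0, 1] -> 0 <= x.
Proof. by rewrite in_itv /= => /andP []. Qed.
Lemma I_le1 (x : R) : x \in `[0, 1] -> x <= 1.
Proof. by rewrite in_itv /= => /andP []. Qed.
Lemma I_in (x : R) : 0 <= x -> x <= 1 -> x \in `[0, 1].
Proof. by move=> a b; rewrite in_itv /= a b. Qed.

Lemma bij0 phi : incr_bij01 phi -> phi 0 = 0.
Proof.
move=> H; have [Hin [Hlt Hs]] := H.
have [x xI px] := Hs 0 I0.
apply/eqP; rewrite eq_le; apply/andP; split.
  by rewrite -{2}px bij_le //; [exact: I_ge0 | exact: I0].
exact: I_ge0 (Hin 0 I0).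
Qed.

Lemma bij1 phi : incr_bij01 phi -> phi 1 = 1.
Proof.
move=> H; have [Hin [Hlt Hs]] := H.
have [x xI px] := Hs 1 I1.
apply/eqP; rewrite eq_le; apply/andP; split.
  exact: I_le1 (Hin 1 I1).
by rewrite -{1}px bij_le //; [exact: I_le1 | exact: I1].
Qed.

Definition inv01 phi (s : R) := xget 0 [set x | x \in `[0, 1] /\ phi x = s].

Lemma inv01P phi : incr_bij01 phi -> forall s, s \in `[0, 1] ->
  inv01 phi s \in `[0, 1] /\ phi (inv01 phi s) = s.
Proof.
move=> [_ [_ Hs]] s sI; rewrite /inv01.
have := (@xgetPex _ 0 [set x | x \in `[0, 1] /\ phi x = s]); apply.
by have [x ? ?] := Hs s sI; exists x.
Qed.

Lemma inv01K phi : incr_bij01 phi -> forall x, x \in `[0, 1] -> inv01 phi (phi x) = x.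
Proof.
move=> H x xI; have [Hin _] := H.
have [a b] := inv01P H (Hin x xI).
exact: (bij_inj H).
Qed.

Lemma inv01_bij phi : incr_bij01 phi -> incr_bij01 (inv01 phi).
Proof.
move=> H; have [Hin _] := H; split; first by move=> s sI; have [] := inv01P H sI.
split.
  move=> s t sI tI st.
  have [a1 b1] := inv01P H sI; have [a2 b2] := inv01P H tI.
  by rewrite -(bij_lt H) // b1 b2.
by move=> z zI; exists (phi z); [exact: Hin | exact: inv01K].
Qed.

Lemma inv01_phi phi : incr_bij01 phi -> forall s, s \in `[0, 1] -> phi (inv01 phi s) = s.
Proof. by move=> H s sI; have [] := inv01P H sI. Qed.

Lemma bij_cont phi : incr_bij01 phi -> {within `[0, 1]%classic, continuous phi}.
Proof.
move=> H; apply: segment_inc_surj_continuous.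
  by move=> x y xI yI; rewrite bij_le.
rewrite (bij0 H) (bij1 H) => z /= zI.
have [_ [_ Hs]] := H; have [x xI px] := Hs z zI.
by exists x.
Qed.

Lemma bij_ed phi : incr_bij01 phi -> forall x, x \in `[0, 1] -> forall e, 0 < e ->
  exists2 d, 0 < d & forall y, y \in `[0, 1] -> `|x - y| < d -> `|phi x - phi y| < e.
Proof.
move=> H x xI e e0.
have [d d0 Hd] := wR_ed (bij_cont H) xI e0.
by exists d.
Qed.

End L1.

Section R1.
Context {R : realType}.
Variable T : R -> R -> R.
Hypothesis HT : strict_tnorm T.
Local Notation I := (`[0, 1] : interval R).

Lemma Tin x y : x \in I -> y \in I -> T x y \in I.
Proof. by case: HT => [[H _]] _; apply: H. Qed.

Lemma TC x y : x \in I -> y \in I -> T x y = T y x.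
Proof. by case: HT => [[_ [H _]]] _; apply: H. Qed.

Lemma TA x y z : x \in I -> y \in I -> z \in I -> T x (T y z) = T (T x y) z.
Proof. by case: HT => [[_ [_ [H _]]]] _; apply: H. Qed.

Lemma Tmonol x x' y : x \in I -> x' \in I -> y \in I -> x <= x' -> T x y <= T x' y.
Proof. by case: HT => [[_ [_ [_ [H _]]]]] _ *; have [] := H x x' y. Qed.

Lemma Tmonor x y y' : x \in I -> y \in I -> y' \in I -> y <= y' -> T x y <= T x y'.
Proof. by case: HT => [[_ [_ [_ [H _]]]]] _ *; have [] := H y y' x. Qed.

Lemma T1 x : x \in I -> T x 1 = x.
Proof. by case: HT => [[_ [_ [_ [_ H]]]]] _; apply: H. Qed.

Lemma T1l x : x \in I -> T 1 x = x.
Proof. by move=> xI; rewrite TC ?T1 //; exact: I1. Qed.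

Lemma Tltl x x' y : x \in I -> x' \in I -> y \in I -> 0 < y -> x < x' -> T x y < T x' y.
Proof. by case: HT => [_ [_ H]]; apply: H. Qed.

Lemma Tltr x y y' : x \in I -> y \in I -> y' \in I -> 0 < x -> y < y' -> T x y < T x y'.
Proof. by move=> xI yI y'I x0 yy; rewrite (TC xI yI) (TC xI y'I); apply: Tltl. Qed.

Lemma T0 x : x \in I -> T x 0 = 0.
Proof.
move=> xI; apply/eqP; rewrite eq_le; apply/andP; split.
  apply: le_trans (Tmonol xI I1 I0 (I_le1 xI)) _.
  by rewrite T1l //; exact: I0.
exact: I_ge0 (Tin xI I0).
Qed.

Lemma T0l x : x \in I -> T 0 x = 0.
Proof. by move=> xI; rewrite TC ?T0 //; exact: I0. Qed.

Lemma Tlel x y : x \in I -> y \in I -> T x y <= x.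
Proof. by move=> xI yI; rewrite -{2}(T1 xI) Tmonor //; [exact: I1 | exact: I_le1]. Qed.

Lemma Tler x y : x \in I -> y \in I -> T x y <= y.
Proof. by move=> xI yI; rewrite TC // Tlel. Qed.

Lemma Tpos x y : x \in I -> y \in I -> 0 < x -> 0 < y -> 0 < T x y.
Proof. by move=> xI yI x0 y0; rewrite -(T0l yI) Tltl //; exact: I0. Qed.

Lemma Tlt2 x x' y y' : x \in I -> x' \in I -> y \in I -> y' \in I ->
  x < x' -> y < y' -> T x y < T x' y'.
Proof.
move=> xI x'I yI y'I xx yy.
have y'0 : 0 < y' by apply: le_lt_trans yy; exact: I_ge0.
have x'0 : 0 < x' by apply: le_lt_trans xx; exact: I_ge0.
apply: le_lt_trans (Tltl xI x'I y'I y'0 xx).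
by apply: Tmonor => //; exact: ltW.
Qed.

Lemma Tle2 x x' y y' : x \in I -> x' \in I -> y \in I -> y' \in I ->
  x <= x' -> y <= y' -> T x y <= T x' y'.
Proof.
move=> xI x'I yI y'I xx yy.
by apply: le_trans (Tmonol xI x'I y'I xx); apply: Tmonor.
Qed.

Definition pw x n := iter n (T x) 1.

Lemma pw0 x : pw x 0 = 1. Proof. by []. Qed.
Lemma pwS x n : pw x n.+1 = T x (pw x n). Proof. by []. Qed.

Lemma pw_in x n : x \in I -> pw x n \in I.
Proof. move=> xI; elim: n => [|n IH]; [exact: I1 | by rewrite pwS Tin]. Qed.

Lemma pw1 x : x \in I -> pw x 1 = x.
Proof. by move=> xI; rewrite pwS pw0 T1. Qed.

Lemma pwD x m n : x \in I -> pw x (m + n) = T (pw x m) (pw x n).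
Proof.
move=> xI; elim: m => [|m IH]; first by rewrite add0n pw0 T1l // pw_in.
by rewrite addSn !pwS IH TA // pw_in.
Qed.

Lemma pwM x m n : x \in I -> pw x (m * n) = pw (pw x m) n.
Proof.
move=> xI; elim: n => [|n IH]; first by rewrite muln0.
by rewrite mulnS pwD // IH pwS.
Qed.

Lemma pwT x y n : x \in I -> y \in I -> pw (T x y) n = T (pw x n) (pw y n).
Proof.
move=> xI yI; elim: n => [|n IH]; first by rewrite !pw0 T1 //; exact: I1.
have px := pw_in n xI; have py := pw_in n yI.
rewrite !pwS IH.
rewrite -(TA xI yI (Tin px py)) (TA yI px py) (TC yI px) -(TA px yI py).
by rewrite (TA xI px (Tin yI py)).
Qed.

Lemma pw_pos x n : x \in I -> 0 < x -> 0 < pw x n.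
Proof.
move=> xI x0; elim: n => [|n IH]; first by rewrite pw0 ltr01.
by rewrite pwS Tpos // pw_in.
Qed.

Lemma pw_le_base x y n : x \in I -> y \in I -> x <= y -> pw x n <= pw y n.
Proof.
move=> xI yI xy; elim: n => [|n IH]; first by rewrite !pw0.
by rewrite !pwS Tle2 // pw_in.
Qed.

Lemma pw_lt_base x y n : x \in I -> y \in I -> x < y -> pw x n.+1 < pw y n.+1.
Proof.
move=> xI yI xy; rewrite !pwS.
have y0 : 0 < y by apply: le_lt_trans xy; exact: I_ge0.
apply: le_lt_trans (Tltl xI yI (pw_in n yI) (pw_pos n yI y0) xy).
by apply: Tmonor; rewrite ?pw_in // pw_le_base // ltW.
Qed.

Lemma pw_le_exp x m n : x \in I -> (m <= n)%N -> pw x n <= pw x m.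
Proof.
move=> xI /subnKC <-; rewrite pwD //; apply: Tlel; exact: pw_in.
Qed.

Lemma pw_lt_exp x m n : x \in I -> 0 < x -> x < 1 -> (m < n)%N -> pw x n < pw x m.
Proof.
move=> xI x0 x1 mn; rewrite -(subnKC (ltnW mn)) pwD //.
rewrite -{2}(T1 (pw_in m xI)).
apply: Tltr; rewrite ?pw_in ?pw_pos //; first exact: I1.
apply: le_lt_trans x1.
by rewrite -{2}(pw1 xI) pw_le_exp // subn_gt0.
Qed.

Lemma pw_le1 x n : x \in I -> pw x n <= 1.
Proof. by move=> xI; apply: I_le1; exact: pw_in. Qed.

End R1.

Section R2.
Context {R : realType}.
Variable T : R -> R -> R.
Hypothesis HT : strict_tnorm T.
Local Notation I := (`[0, 1] : interval R).
Local Notation pw := (pw T).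

Lemma T_ed x y : x \in I -> y \in I -> forall e, 0 < e -> exists2 d, 0 < d &
  forall u v, u \in I -> v \in I -> `|x - u| < d -> `|y - v| < d -> `|T x y - T u v| < e.
Proof.
move=> xI yI e e0; case: HT => _ [Hc _].
have := wR2_ed Hc (x := (x, y)) (conj xI yI) e0.
move=> [d d0 Hd]; exists d => // u v uI vI xu yv.
exact: (Hd (u, v)).
Qed.

Lemma near_one (d : R) : 0 < d -> exists z, [/\ z \in I, 0 < z, z < 1 & 1 - d < z].
Proof.
move=> d0; pose m := Num.min d 1.
have m0 : 0 < m by rewrite lt_min d0 ltr01.
have m1 : m <= 1 by rewrite ge_min lexx orbT.
exists (1 - m / 2); split.
- apply: I_in; first by rewrite subr_ge0; apply: le_trans m1; rewrite ler_pdivrMr // ler_pMr // ler1n.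
  by rewrite lerBlDr lerDl divr_ge0 // ltW.
- rewrite subr_gt0; apply: lt_le_trans m1; rewrite ltr_pdivrMr // ltr_pMr // ltr1n //.
- by rewrite ltrBlDr ltrDl divr_gt0.
- rewrite ltrD2l ltrN2; apply: (@lt_le_trans _ _ m); last by rewrite ge_min lexx.
  by rewrite ltr_pdivrMr // ltr_pMr // ltr1n.
Qed.

Lemma arch x y : x \in I -> x < 1 -> 0 < y -> exists n, pw x n < y.
Proof.
move=> xI x1 y0; apply: contrapT => Hn.
have Hy : forall n, y <= pw x n.
  by move=> n; rewrite leNgt; apply/negP => H; apply: Hn; exists n.
pose E := range (pw x).
have Ene : E !=set0 by exists (pw x 0); exists 0%N.
have Elb : has_lbound E by exists y => _ [n _ <-]; exact: Hy.
pose L := inf E.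
have yL : y <= L by apply: lb_le_inf => // _ [n _ <-]; exact: Hy.
have Lx : L <= x by rewrite -(pw1 HT xI); apply: ge_inf => //; exists 1%N.
have L0 : 0 < L by apply: lt_le_trans yL.
have LI : L \in I by apply: I_in; [exact: ltW | exact: le_trans Lx (I_le1 xI)].
have L1 : L < 1 by apply: le_lt_trans x1.
have LL : T L L < L.
  by have := Tltl HT LI I1 LI L0 L1; rewrite T1l.
have e0 : 0 < L - T L L by rewrite subr_gt0.
have [d d0 Hd] := T_ed LI LI e0.
have [_ [n _ <-] wL] := inf_adherent d0 (conj Ene Elb).
have Lw : L <= pw x n by apply: ge_inf => //; exists n.
have wI := pw_in HT n xI.
have h1 : `|L - pw x n| < d by rewrite ltr_distlC; apply/andP; split; rewrite -/L in wL; lra.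
have := Hd _ _ wI wI h1 h1.
rewrite -(pwD HT) // ltr_distlC => /andP [_ h2].
have : L <= pw x (n + n) by apply: ge_inf => //; exists (n + n)%N.
lra.
Qed.

Lemma pw_near1 n e : 0 < e -> exists2 d, 0 < d &
  forall u, u \in I -> 1 - d < u -> 1 - e < pw u n.
Proof.
elim: n e => [|n IH] e e0.
  by exists 1 => // u _ _; rewrite pw0; lra.
have [de de0 Hde] := T_ed I1 I1 e0.
have [d' d'0 Hd'] := IH de de0.
exists (Num.min d' de); first by rewrite lt_min d'0 de0.
move=> u uI h1.
have u1 := I_le1 uI.
have hu : 1 - d' < u by apply: le_lt_trans h1; rewrite lerD2l lerN2 ge_min lexx.
have hu2 : 1 - de < u by apply: le_lt_trans h1; rewrite lerD2l lerN2 ge_min lexx orbT.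
have hp := Hd' u uI hu.
have p1 := pw_le1 HT n uI.
have := Hde u (pw u n) uI (pw_in HT n uI).
rewrite T1 ?I1 // !ltr_distlC pwS.
move=> H; have /andP [H1 _] := H (ltac:(apply/andP; split; lra)) (ltac:(apply/andP; split; lra)).
lra.
Qed.

Lemma exists_z_pw n c : c < 1 -> exists z, [/\ z \in I, 0 < z, z < 1 & c < pw z n].
Proof.
move=> c1; have [d d0 Hd] := pw_near1 n (ltac:(rewrite subr_gt0; exact: c1) : 0 < 1 - c).
have [z [zI z0 z1 zd]] := near_one d0.
by exists z; split => //; have := Hd z zI zd; lra.
Qed.

Lemma exists_z_T x y : x \in I -> y < x -> exists z, [/\ z \in I, 0 < z, z < 1 & y < T x z].
Proof.
move=> xI yx; have [d d0 Hd] := T_ed xI I1 (ltac:(rewrite subr_gt0; exact: yx) : 0 < x - y).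
have [z [zI z0 z1 zd]] := near_one d0.
exists z; split => //.
have := Hd x z xI zI; rewrite subrr normr0 => /(_ d0).
rewrite T1 // => H.
have : `|1 - z| < d by rewrite ltr_distlC; apply/andP; split; lra.
move/H; rewrite ltr_distlC => /andP [H1 _].
lra.
Qed.

End R2.

Section R3.
Context {R : realType}.
Variable T : R -> R -> R.
Hypothesis HT : strict_tnorm T.
Local Notation I := (`[0, 1] : interval R).
Local Notation pw := (pw T).

Definition cc : R := 2^-1.
Lemma cc0 : 0 < cc. Proof. by rewrite /cc invr_gt0. Qed.
Lemma cc1 : cc < 1. Proof. by rewrite /cc invf_lt1 // ltr1n. Qed.
Lemma ccI : cc \in I. Proof. apply: I_in; [exact: ltW cc0 | exact: ltW cc1]. Qed.

Definition Sx x := [set r : R | exists m n : nat, pw x n.+1 <= pw cc m /\ r = m%:R / n.+1%:R].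
Definition fT x := sup (Sx x).

Lemma Kex x n : x \in I -> 0 < x -> exists m, pw x n.+1 <= pw cc m /\ pw cc m.+1 < pw x n.+1.
Proof.
move=> xI x0.
have exP : exists k, (fun k => pw cc k < pw x n.+1) k.
  exact: (arch HT ccI cc1 (pw_pos HT n.+1 xI x0)).
case: (ex_minnP exP) => m0 Pm0 minm.
case: m0 Pm0 minm => [|m] Pm minm.
  by move: Pm; rewrite pw0 => h; have := pw_le1 HT n.+1 xI; lra.
exists m; split => //.
rewrite leNgt; apply/negP => h; have := minm m h; by rewrite ltnn.
Qed.

Lemma frac_le (m N M N' : nat) : (0 < N)%N -> (0 < N')%N -> (m * N' <= M * N)%N ->
  m%:R / N%:R <= M%:R / N'%:R :> R.
Proof.
move=> N0 N'0 h.
by rewrite ler_pdivrMr ?ltr0n // mulrAC ler_pdivlMr ?ltr0n // -!natrM ler_nat.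
Qed.

Lemma key x n m n' m' : x \in I -> 0 < x -> pw x n.+1 <= pw cc m ->
  pw cc m'.+1 < pw x n'.+1 -> (m * n'.+1 < m'.+1 * n.+1)%N.
Proof.
move=> xI x0 h1 h2.
have A : pw x (n.+1 * n'.+1) <= pw cc (m * n'.+1).
  rewrite !(pwM HT) //; last exact: ccI.
  by apply: pw_le_base => //; rewrite ?pw_in //; exact: ccI.
have B : pw cc (m'.+1 * n.+1) < pw x (n'.+1 * n.+1).
  rewrite !(pwM HT) //; last exact: ccI.
  by apply: pw_lt_base => //; rewrite ?pw_in //; exact: ccI.
rewrite ltnNge; apply/negP => h.
have := pw_le_exp HT ccI h.
rewrite [(n'.+1 * _)%N]mulnC in B; lra.
Qed.

Lemma S_ub x n' m' : x \in I -> 0 < x -> pw cc m'.+1 < pw x n'.+1 ->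
  ubound (Sx x) (m'.+1%:R / n'.+1%:R).
Proof.
move=> xI x0 h _ [m [n [h1 ->]]].
by apply: frac_le => //; apply: ltnW; exact: key h1 h.
Qed.

Lemma Sx_ne x : x \in I -> Sx x !=set0.
Proof.
move=> xI; exists 0; exists 0%N, 0%N; split; last by rewrite mul0r.
by rewrite pw0; exact: pw_le1.
Qed.

Lemma hsup x : x \in I -> 0 < x -> has_sup (Sx x).
Proof.
move=> xI x0; split; first exact: Sx_ne.
have [m [_ h]] := Kex 0 xI x0.
by exists (m.+1%:R / 1%:R); exact: S_ub h.
Qed.

Lemma f_lower x n m : x \in I -> 0 < x -> pw x n.+1 <= pw cc m ->
  m%:R / n.+1%:R <= fT x.
Proof.
move=> xI x0 h; apply: sup_upper_bound; first exact: hsup.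
by exists m, n.
Qed.

Lemma f_upper x n m : x \in I -> 0 < x -> pw cc m.+1 < pw x n.+1 ->
  fT x <= m.+1%:R / n.+1%:R.
Proof.
move=> xI x0 h; apply: ge_sup; first exact: Sx_ne.
exact: S_ub h.
Qed.

End R3.

Section R4.
Context {R : realType}.
Variable T : R -> R -> R.
Hypothesis HT : strict_tnorm T.
Local Notation I := (`[0, 1] : interval R).
Local Notation pw := (pw T).
Local Notation f := (fT T).

Lemma small1 (a b : R) : (forall n, a <= b + n.+1%:R^-1) -> a <= b.
Proof.
move=> H; rewrite leNgt; apply/negP => ba; have [k hk] := ltr_add_invr ba.
by have := le_lt_trans (H k) hk; rewrite ltxx.
Qed.

Lemma small2 (a b : R) : (forall n, a <= b + 2 / n.+1%:R) -> a <= b.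
Proof.
move=> H; apply: small1 => n; have := H (n.*2.+1).
have -> : (n.*2.+1).+1%:R = 2 * n.+1%:R :> R.
  by rewrite -[2 in RHS]/(2%:R) -natrM mul2n doubleS.
by rewrite invfM mulrA divff ?mul1r.
Qed.

Lemma natS_div (m N : nat) : m.+1%:R / N%:R = m%:R / N%:R + N%:R^-1 :> R.
Proof. by rewrite -addn1 natrD mulrDl mul1r. Qed.

Lemma natD_div (m m' N : nat) : (m + m')%:R / N%:R = m%:R / N%:R + m'%:R / N%:R :> R.
Proof. by rewrite natrD mulrDl. Qed.

Lemma f_add x y : x \in I -> y \in I -> 0 < x -> 0 < y -> f (T x y) = f x + f y.
Proof.
move=> xI yI x0 y0.
have TI := Tin HT xI yI; have T0 := Tpos HT xI yI x0 y0.
have ccI' := @ccI R.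
apply/eqP; rewrite eq_le; apply/andP; split; apply: small2 => n.
- have [mx [hx1 hx2]] := Kex HT n xI x0.
  have [my [hy1 hy2]] := Kex HT n yI y0.
  have h : pw cc (mx + my).+2 < pw (T x y) n.+1.
    rewrite (pwT HT) //; have -> : (mx + my).+2 = (mx.+1 + my.+1)%N by rewrite addnS addSn.
    rewrite (pwD HT) //.
    by apply: Tlt2 => //; rewrite pw_in.
  have := f_upper HT TI T0 h.
  have := f_lower HT xI x0 hx1; have := f_lower HT yI y0 hy1.
  rewrite !natS_div natD_div.
  set A := mx%:R / _; set B := my%:R / _; set D := n.+1%:R^-1.
  lra.
- have [mx [hx1 hx2]] := Kex HT n xI x0.
  have [my [hy1 hy2]] := Kex HT n yI y0.
  have h : pw (T x y) n.+1 <= pw cc (mx + my).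
    rewrite (pwT HT) // (pwD HT) //.
    by apply: Tle2 => //; rewrite pw_in.
  have := f_lower HT TI T0 h.
  have := f_upper HT xI x0 hx2; have := f_upper HT yI y0 hy2.
  rewrite !natS_div natD_div.
  set A := mx%:R / _; set B := my%:R / _; set D := n.+1%:R^-1.
  lra.
Qed.

Lemma f_ge0 x : x \in I -> 0 < x -> 0 <= f x.
Proof.
move=> xI x0; have := @f_lower _ _ HT x 0 0 xI x0.
rewrite mul0r; apply; rewrite pw0; exact: pw_le1.
Qed.

Lemma f_mono x y : x \in I -> y \in I -> 0 < x -> x <= y -> f y <= f x.
Proof.
move=> xI yI x0 xy; have y0 : 0 < y by apply: lt_le_trans xy.
apply: small2 => n.
have [my [hy1 hy2]] := Kex HT n yI y0.
have h : pw x n.+1 <= pw cc my by apply: le_trans hy1; apply: pw_le_base.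
have := f_lower HT xI x0 h; have := f_upper HT yI y0 hy2.
rewrite (natS_div my).
set A := my%:R / _; set D := n.+1%:R^-1.
have : 0 <= D by rewrite /D invr_ge0.
lra.
Qed.

Lemma f1 : f 1 = 0.
Proof.
have := f_add I1 I1 ltr01 ltr01; rewrite T1 //; [lra | exact: I1].
Qed.

Lemma f_pos z : z \in I -> 0 < z -> z < 1 -> 0 < f z.
Proof.
move=> zI z0 z1; have [n hn] := arch HT zI z1 cc0.
case: n hn => [|k] hk.
  by move: hk; rewrite pw0 => h; have := lt_trans h cc1; rewrite ltxx.
have h : pw z k.+1 <= pw cc 1 by rewrite pw1 ?ltW //; exact: ccI.
apply: lt_le_trans (f_lower HT zI z0 h).
by rewrite mul1r invr_gt0 ltr0n.
Qed.

Lemma f_strict x y : x \in I -> y \in I -> 0 < x -> x < y -> f y < f x.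
Proof.
move=> xI yI x0 xy; have y0 : 0 < y by apply: lt_trans xy.
have [z [zI z0 z1 hz]] := exists_z_T HT yI xy.
have TI := Tin HT yI zI.
have := f_mono xI TI x0 (ltW hz); rewrite f_add //.
have := f_pos zI z0 z1; lra.
Qed.

Lemma f_small e : 0 < e -> exists z, [/\ z \in I, 0 < z, z < 1 & f z <= e].
Proof.
move=> e0; pose n := Num.truncn (e^-1).
have hn : e^-1 < n.+1%:R.
  have ei : 0 <= e^-1 by rewrite invr_ge0 ltW.
  by have /andP [_ ->] := truncn_itv ei.
have [z [zI z0 z1 hz]] := exists_z_pw HT n.+1 cc1.
exists z; split => //.
have h : pw cc 1 < pw z n.+1 by rewrite pw1 //; exact: ccI.
apply: le_trans (f_upper HT zI z0 h) _.
rewrite mul1r -[e]invrK lef_pV2 ?posrE ?ltr0n ?invr_gt0 //; exact: ltW.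
Qed.

Lemma f_pw z k : z \in I -> 0 < z -> f (pw z k) = k%:R * f z.
Proof.
move=> zI z0; elim: k => [|k IH]; first by rewrite pw0 f1 mul0r.
by rewrite pwS f_add ?pw_in ?pw_pos // IH -addn1 natrD mulrDl mul1r addrC.
Qed.

End R4.

Section R5.
Context {R : realType}.
Variable T : R -> R -> R.
Hypothesis HT : strict_tnorm T.
Local Notation I := (`[0, 1] : interval R).
Local Notation pw := (pw T).
Local Notation f := (fT T).

Lemma f_surj t : 0 <= t -> exists x, [/\ x \in I, 0 < x & f x = t].
Proof.
rewrite le_eqVlt => /orP [/eqP <-|t0].
  by exists 1; split; [exact: I1 | exact: ltr01 | exact: (f1 HT)].
pose A := [set y | y \in I /\ 0 < y /\ f y <= t].
have approx : forall e, 0 < e -> exists a b, [/\ A a, 0 < b, b \in I & lbound A b] /\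
    (t - e <= f a /\ f b <= t + e).
  move=> e e0.
  have [z [zI z0 z1 hz]] := f_small HT e0.
  have d0 := f_pos HT zI z0 z1.
  set d := f z in hz d0.
  pose k := Num.truncn (t / d).
  have /andP [hk1 hk2] := truncn_itv (ltW (divr_gt0 t0 d0) : 0 <= t / d).
  rewrite -/k ler_pdivlMr // in hk1.
  rewrite -/k ltr_pdivrMr // in hk2.
  have fa := f_pw HT k zI z0; have fb := f_pw HT k.+1 zI z0.
  rewrite -/d in fa fb.
  have hk3 : k.+1%:R * d = k%:R * d + d by rewrite -addn1 natrD mulrDl mul1r.
  exists (pw z k), (pw z k.+1); split; [split|split].
  - by split; [exact: pw_in | split; [exact: pw_pos | rewrite fa]].
  - exact: pw_pos.
  - exact: pw_in.
  - move=> y [yI [y0 fy]]; rewrite leNgt; apply/negP => yb.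
    have := f_mono HT yI (pw_in HT k.+1 zI) y0 (ltW yb).
    rewrite fb; lra.
  - rewrite fa; lra.
  - rewrite fb; lra.
have Ane : A !=set0.
  by exists 1; split; [exact: I1 | split; [exact: ltr01 | rewrite (f1 HT); exact: ltW]].
have Alb : has_lbound A by exists 0 => y [_ [y0 _]]; exact: ltW.
pose x := inf A.
have [a [b [[Aa b0 bI lb] _]]] := approx 1 ltr01.
have bx : b <= x by exact: lb_le_inf.
have xa : x <= a by exact: ge_inf.
have x0 : 0 < x by apply: lt_le_trans bx.
have xI : x \in I.
  apply: I_in; first exact: ltW.
  by case: Aa => aI _; apply: le_trans xa _; exact: I_le1.
exists x; split => //.
apply/eqP; rewrite eq_le; apply/andP; split; apply: small2 => n.
- have e0 : 0 < 2 / n.+1%:R :> R by rewrite divr_gt0 // ltr0n.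
  have [a' [b' [[Aa' b'0 b'I lb'] [_ hb']]]] := approx _ e0.
  have := f_mono HT b'I xI b'0 (lb_le_inf Ane lb') => h; exact: le_trans h hb'.
- have e0 : 0 < 2 / n.+1%:R :> R by rewrite divr_gt0 // ltr0n.
  have [a' [b' [[Aa' b'0 b'I lb'] [ha' _]]]] := approx _ e0.
  case: (Aa') => a'I _.
  have := f_mono HT xI a'I x0 (ge_inf Alb Aa') => h; rewrite -lerBlDr; exact: le_trans ha' h.
Qed.

Definition phiT (x : R) := if 0 < x then expR (- f x) else 0.

Lemma phiT_bij : incr_bij01 phiT.
Proof.
split; [|split].
- move=> x xI; rewrite /phiT; case: ifP => x0; last exact: I0.
  apply: I_in; first exact: expR_ge0.
  by rewrite expR_le1 oppr_le0 f_ge0.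
- move=> x y xI yI xy; rewrite /phiT.
  have y0 : 0 < y by apply: le_lt_trans xy; exact: I_ge0.
  rewrite y0; case: ifP => x0; last exact: expR_gt0.
  by rewrite ltr_expR ltrN2 f_strict.
- move=> z zI; have := I_ge0 zI; rewrite le_eqVlt => /orP [/eqP <-|z0].
    by exists 0; [exact: I0 | rewrite /phiT ltxx].
  have [x [xI x0 fx]] := f_surj (ltac:(rewrite oppr_ge0; apply: ln_le0; exact: I_le1) : 0 <= - ln z).
  exists x => //; rewrite /phiT x0 fx opprK lnK //.
Qed.

Lemma I_0_or_pos (x : R) : x \in I -> x = 0 \/ 0 < x.
Proof.
move=> xI; have := I_ge0 xI; rewrite le_eqVlt => /orP [/eqP <-|]; by [left|right].
Qed.

Lemma phiT_mul x y : x \in I -> y \in I -> phiT (T x y) = phiT x * phiT y.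
Proof.
move=> xI yI.
case: (I_0_or_pos xI) => [->|x0].
  by rewrite (T0l HT yI) /phiT ltxx mul0r.
case: (I_0_or_pos yI) => [->|y0].
  by rewrite (T0 HT xI) /phiT ltxx mulr0.
rewrite /phiT (Tpos HT xI yI x0 y0) x0 y0 (f_add HT) // opprD expRD //.
Qed.

End R5.

Theorem strict_rep {R : realType} (T : R -> R -> R) : strict_tnorm T ->
  exists phi : R -> R, incr_bij01 phi /\
    forall x y, x \in `[0, 1] -> y \in `[0, 1] -> T x y = inv01 phi (phi x * phi y).
Proof.
move=> HT; exists (phiT T); split; first exact: phiT_bij.
move=> x y xI yI; rewrite -phiT_mul // inv01K //; first exact: phiT_bij.
exact: Tin.
Qed.

Section P.
Context {R : realType}.
Local Notation I := (`[0, 1] : interval R).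

Lemma pa_in (F : R -> R) : pseudo_automorphism F -> forall x, x \in I -> F x \in I.
Proof. by case. Qed.
Lemma pa_le (F : R -> R) : pseudo_automorphism F -> forall x y, x \in I -> y \in I -> x <= y -> F x <= F y.
Proof. by case=> [_ [_ [H _]]]. Qed.
Lemma pa_1 (F : R -> R) : pseudo_automorphism F -> forall x, x \in I -> (F x = 1 <-> x = 1).
Proof. by case=> [_ [_ [_ [H _]]]]. Qed.
Lemma pa_0 (F : R -> R) : pseudo_automorphism F -> forall x, x \in I -> (F x = 0 <-> x = 0).
Proof. by case=> [_ [_ [_ [_ H]]]]. Qed.
Lemma pa_ed (F : R -> R) : pseudo_automorphism F -> forall x, x \in I -> forall e, 0 < e ->
  exists2 d, 0 < d & forall y, y \in I -> `|x - y| < d -> `|F x - F y| < e.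
Proof.
case=> [_ [Fc _]] x xI e e0.
have [d d0 Hd] := wR_ed Fc (x := x) xI e0.
by exists d.
Qed.

Lemma pa_comp_bij (F phi : R -> R) : pseudo_automorphism F -> incr_bij01 phi ->
  pseudo_automorphism (fun s => F (phi s)).
Proof.
move=> HF Hp; have [pin _] := Hp.
split; [|split; [|split; [|split]]].
- by move=> x xI; apply: pa_in => //; exact: pin.
- apply: ed_wR => x xI e e0.
  have [d1 d10 H1] := pa_ed HF (pin x xI) e0.
  have [d d0 Hd] := bij_ed Hp xI d10.
  exists d => // y yI xy; apply: H1; [exact: pin | exact: Hd].
- move=> x y xI yI xy; apply: pa_le => //; try exact: pin.
  by rewrite (bij_le Hp).
- move=> x xI; rewrite pa_1 //; last exact: pin.
  split => [h|->]; last exact: bij1.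
  by apply: (bij_inj Hp) => //; [exact: I1 | rewrite bij1].
- move=> x xI; rewrite pa_0 //; last exact: pin.
  split => [h|->]; last exact: bij0.
  by apply: (bij_inj Hp) => //; [exact: I0 | rewrite bij0].
Qed.

End P.

Section P2.
Context {R : realType}.
Local Notation I := (`[0, 1] : interval R).

Lemma mulI (a b : R) : a \in I -> b \in I -> a * b \in I.
Proof.
move=> aI bI; apply: I_in; first by rewrite mulr_ge0 // I_ge0.
by rewrite mulr_ile1 ?I_ge0 ?I_le1.
Qed.

Lemma prod_lip (a b a' b' : R) : a \in I -> b \in I -> a' \in I -> b' \in I ->
  `|a * b - a' * b'| <= `|a - a'| + `|b - b'|.
Proof.
move=> aI bI a'I b'I.
have -> : a * b - a' * b' = a * (b - b') + b' * (a - a') by ring.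
apply: le_trans (ler_normD _ _) _; rewrite addrC !normrM.
apply: lerD; rewrite ler_piMl //; rewrite ger0_norm ?I_ge0 ?I_le1 //.
Qed.

Lemma mul_eq1_I (a b : R) : a \in I -> b \in I -> (a * b = 1 <-> a = 1 /\ b = 1).
Proof.
move=> aI bI; split => [h|[-> ->]]; last by rewrite mulr1.
have a0 := I_ge0 aI; have a1 := I_le1 aI; have b0 := I_ge0 bI; have b1 := I_le1 bI.
have ha : a = 1.
  apply/eqP; rewrite eq_le a1 /=; rewrite leNgt; apply/negP => al.
  have : a * b <= a by rewrite ler_piMr.
  by rewrite h => h2; have := le_lt_trans h2 al; rewrite ltxx.
by split => //; move: h; rewrite ha mul1r.
Qed.

Variable phi H : R -> R.
Hypothesis Hp : incr_bij01 phi.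
Hypothesis HH : pseudo_automorphism H.

Lemma pin x : x \in I -> phi x \in I. Proof. by case: Hp => h _; exact: h. Qed.

Lemma phi_eq0 x : x \in I -> (phi x = 0 <-> x = 0).
Proof.
move=> xI; split => [h|->]; last exact: bij0.
by apply: (bij_inj Hp) => //; [exact: I0 | rewrite bij0].
Qed.

Lemma phi_eq1 x : x \in I -> (phi x = 1 <-> x = 1).
Proof.
move=> xI; split => [h|->]; last exact: bij1.
by apply: (bij_inj Hp) => //; [exact: I1 | rewrite bij1].
Qed.

Lemma three_overlap O : (forall x y, x \in I -> y \in I -> O x y = H (phi x * phi y)) ->
  overlap O.
Proof.
move=> HO; split; [|split; [|split; [|split; [|split]]]].
- move=> x y xI yI; rewrite HO //; apply: pa_in => //; apply: mulI; exact: pin.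
- by move=> x y xI yI; rewrite !HO // mulrC.
- move=> x y xI yI; rewrite HO // pa_0 //; last by apply: mulI; exact: pin.
  split => /eqP; rewrite mulf_eq0 => /orP [] /eqP h; apply/eqP; rewrite mulf_eq0.
  + by move/phi_eq0: h => -> //; rewrite eqxx.
  + by move/phi_eq0: h => -> //; rewrite eqxx orbT.
  + by rewrite h bij0 // eqxx.
  + by rewrite h bij0 // eqxx orbT.
- move=> x y xI yI; rewrite HO // pa_1 //; last by apply: mulI; exact: pin.
  rewrite mul_eq1_I ?pin // mul_eq1_I //.
  by rewrite phi_eq1 // phi_eq1.
- move=> x x' y xI x'I yI xx; rewrite !HO //; split; apply: pa_le => //;
    try (apply: mulI; exact: pin).
  + by apply: ler_wpM2r; [exact: I_ge0 (pin yI) | rewrite bij_le].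
  + by apply: ler_wpM2l; [exact: I_ge0 (pin yI) | rewrite bij_le].
- apply: ed_wR2 => [[x y]] [/= xI yI] e e0.
  have pxy := mulI (pin xI) (pin yI).
  have [d1 d10 H1] := pa_ed HH pxy e0.
  have d2 : 0 < d1 / 2 by rewrite divr_gt0.
  have [dx dx0 Hx] := bij_ed Hp xI d2.
  have [dy dy0 Hy] := bij_ed Hp yI d2.
  exists (Num.min dx dy); first by rewrite lt_min dx0 dy0.
  move=> [u v] [/= uI vI]; rewrite !lt_min => /andP [ux _] /andP [_ vy].
  rewrite !HO //; apply: H1; first by apply: mulI; exact: pin.
  apply: le_lt_trans (prod_lip (pin xI) (pin yI) (pin uI) (pin vI)) _.
  have := Hx u uI ux; have := Hy v vI vy; lra.
Qed.

End P2.

Section P3.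
Context {R : realType}.
Local Notation I := (`[0, 1] : interval R).

Lemma three_two O (phi H : R -> R) : incr_bij01 phi -> pseudo_automorphism H ->
  (forall x y, x \in I -> y \in I -> O x y = H (phi x * phi y)) ->
  exists (F : R -> R) (T : R -> R -> R),
      pseudo_automorphism F /\ strict_tnorm T /\
      (forall x y, x \in `[0, 1] -> y \in `[0, 1] -> O x y = F (T x y)).
Proof.
move=> Hp HH HO.
have Hi := inv01_bij Hp.
have iin : forall s, s \in I -> inv01 phi s \in I by case: Hi.
have pI : forall x, x \in I -> phi x \in I by case: Hp.
exists (fun x => H (phi x)), (fun x y => inv01 phi (phi x * phi y)).
split; first exact: pa_comp_bij.
split; last first.
  by move=> x y xI yI; rewrite HO // inv01_phi //; apply: mulI; exact: pI.
split; [split; [|split; [|split; [|split]]]|split].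
- by move=> x y xI yI; apply: iin; apply: mulI; exact: pI.
- by move=> x y xI yI; rewrite mulrC.
- move=> x y z xI yI zI.
  rewrite !inv01_phi ?mulrA //; apply: mulI; exact: pI.
- move=> x x' y xI x'I yI xx.
  have h1 := mulI (pI _ xI) (pI _ yI); have h2 := mulI (pI _ x'I) (pI _ yI).
  have h3 := mulI (pI _ yI) (pI _ xI); have h4 := mulI (pI _ yI) (pI _ x'I).
  have py := I_ge0 (pI _ yI).
  have hx : phi x <= phi x' by rewrite (bij_le Hp).
  split; rewrite (bij_le Hi) //.
  + exact: ler_wpM2r.
  + exact: ler_wpM2l.
- by move=> x xI; rewrite bij1 // mulr1 inv01K.
- apply: ed_wR2 => [[x y]] [/= xI yI] e e0.
  have pxy := mulI (pI _ xI) (pI _ yI).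
  have [d1 d10 H1] := bij_ed Hi pxy e0.
  have d2 : 0 < d1 / 2 by rewrite divr_gt0.
  have [dx dx0 Hx] := bij_ed Hp xI d2.
  have [dy dy0 Hy] := bij_ed Hp yI d2.
  exists (Num.min dx dy); first by rewrite lt_min dx0 dy0.
  move=> [u v] [/= uI vI]; rewrite !lt_min => /andP [ux _] /andP [_ vy].
  apply: H1; first by apply: mulI; exact: pI.
  apply: le_lt_trans (prod_lip (pI _ xI) (pI _ yI) (pI _ uI) (pI _ vI)) _.
  have := Hx u uI ux; have := Hy v vI vy; lra.
- move=> x x' y xI x'I yI y0 xx.
  have h1 := mulI (pI _ xI) (pI _ yI); have h2 := mulI (pI _ x'I) (pI _ yI).
  rewrite (bij_lt Hi) //.
  have py : 0 < phi y by rewrite -(bij0 Hp) (bij_lt Hp) //; exact: I0.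
  by rewrite ltr_pM2r // (bij_lt Hp).
Qed.

Lemma two_three O :
  (overlap O /\ exists (F : R -> R) (T : R -> R -> R),
      pseudo_automorphism F /\ strict_tnorm T /\
      (forall x y, x \in `[0, 1] -> y \in `[0, 1] -> O x y = F (T x y))) ->
  exists (phi : R -> R) (H : R -> R),
      incr_bij01 phi /\ pseudo_automorphism H /\
      (forall x y, x \in `[0, 1] -> y \in `[0, 1] -> O x y = H (phi x * phi y)).
Proof.
move=> [_ [F [T [HF [HT HO]]]]].
have [phi [Hp Hrep]] := strict_rep HT.
exists phi, (fun s => F (inv01 phi s)); split => //; split.
  exact: pa_comp_bij (inv01_bij Hp).
by move=> x y xI yI; rewrite HO // Hrep.
Qed.

End P3.

Section Q1.
Context {R : realType}.
Local Notation I := (`[0, 1] : interval R).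

Lemma cont_ed (g : R -> R) p : {for p, continuous g} ->
  forall e, 0 < e -> exists2 d, 0 < d & forall q, `|p - q| < d -> `|g p - g q| < e.
Proof.
move=> gc e e0; move: gc => /cvgrPdist_lt /(_ e e0) /nbhs_ballP [d /= d0 Hd].
by exists d.
Qed.

Lemma ln_ed (p : R) : 0 < p -> forall e, 0 < e -> exists2 d, 0 < d &
  forall q, `|p - q| < d -> 0 < q /\ `|ln p - ln q| < e.
Proof.
move=> p0 e e0; have [d d0 Hd] := @cont_ed (@ln R) p (@continuous_ln R p p0) e e0.
exists (Num.min d p); first by rewrite lt_min d0 p0.
move=> q; rewrite lt_min => /andP [h1 h2]; split; last exact: Hd.
by move: h2; rewrite ltr_distlC => /andP [h _]; lra.
Qed.

Lemma exp_ed (p : R) : forall e, 0 < e -> exists2 d, 0 < d &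
  forall q, `|p - q| < d -> `|expR p - expR q| < e.
Proof. by move=> e e0; apply: cont_ed => //; exact: continuous_expR. Qed.

Lemma min1_lip (A B : R) : `|Num.min 1 A - Num.min 1 B| <= `|A - B|.
Proof.
case: (leP 1 A) => hA; case: (leP 1 B) => hB; rewrite ?subrr ?normr0 //.
- rewrite ger0_norm; last lra.
  rewrite ger0_norm; lra.
- rewrite ler0_norm; last lra.
  rewrite ler0_norm; lra.
Qed.

Variable a : R.
Hypothesis ha : 0 <= a.
Variable phi H : R -> R.
Hypothesis Hp : incr_bij01 phi.
Hypothesis HH : pseudo_automorphism H.

Definition th (x : R) : \bar R := if 0 < phi x then ((a / 2) - ln (phi x))%:E else +oo%E.
Definition g (r : R) : R := Num.min 1 (expR (a - r)).
Definition vth (u : \bar R) : R :=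
  match u with r%:E => H (g r) | _ => H 0 end.

Lemma pI x : x \in I -> phi x \in I. Proof. by case: Hp => h _; exact: h. Qed.

Lemma g_I r : g r \in I.
Proof.
apply: I_in; first by rewrite le_min ler01 expR_ge0.
by rewrite ge_min lexx.
Qed.

Lemma th_ge0 x : x \in I -> (0 <= th x)%E.
Proof.
move=> xI; rewrite /th; case: ifP => // p0.
rewrite lee_fin subr_ge0; apply: le_trans (ln_le0 (I_le1 (pI xI))) _.
by rewrite divr_ge0.
Qed.

Lemma th_strict x y : x \in I -> y \in I -> x < y -> (th y < th x)%E.
Proof.
move=> xI yI xy; have pxy : phi x < phi y by rewrite (bij_lt Hp).
have py : 0 < phi y by apply: le_lt_trans pxy; exact: I_ge0 (pI xI).
rewrite /th py; case: ifP => px; last by rewrite ltry.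
by rewrite lte_fin ltrD2l ltrN2 ltr_ln.
Qed.

Lemma vth_I u : (0 <= u)%E -> vth u \in I.
Proof.
by case: u => [r| |] _ /=; apply: pa_in => //; [exact: g_I | exact: I0 | exact: I0].
Qed.

Lemma g_le r s : r <= s -> g s <= g r.
Proof.
move=> rs; rewrite /g le_min ge_min lexx /= ge_min; apply/orP; right.
by rewrite ler_expR lerD2l lerN2.
Qed.

Lemma vth_dec u v : (0 <= u)%E -> (0 <= v)%E -> (u <= v)%E -> vth v <= vth u.
Proof.
case: u => [r| |]; case: v => [s| |] //= _ _ h.
- by apply: pa_le => //; rewrite ?g_I //; apply: g_le.
- apply: pa_le => //; rewrite ?g_I ?I0 //; exact: I_ge0 (g_I r).
Qed.

Lemma th_a x : x \in I -> (th x = (a / 2)%:E <-> x = 1).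
Proof.
move=> xI; rewrite /th; split.
- case: ifP => // p0 [] h.
  have h2 : ln (phi x) = 0 by lra.
  by apply/(phi_eq1 Hp) => //; rewrite -[phi x]lnK ?h2 ?expR0.
- move=> ->; rewrite (bij1 Hp) ltr01 ln1 subr0 //.
Qed.

Lemma th_cont : {within unit_I, continuous th}.
Proof.
apply: ed_wE.
- by move=> x _; rewrite /th; case: ifP.
- move=> x r xI; rewrite /th; case: ifP => // px [<-] e e0.
  have [d1 d10 H1] := ln_ed px e0.
  have [d d0 Hd] := bij_ed Hp xI d10.
  exists d => // y yI xy.
  have [py hl] := H1 _ (Hd y yI xy).
  exists (a / 2 - ln (phi y)); first by rewrite py.
  move: hl; rewrite !ltr_distlC => /andP [h1 h2]; apply/andP; split; lra.
- move=> x xI; rewrite /th; case: ifP => // px _ M.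
  have px0 : phi x = 0.
    by apply/eqP; rewrite eq_le I_ge0 ?pI // andbT leNgt px.
  have e0 : 0 < expR (a / 2 - M) := expR_gt0 _.
  have [d d0 Hd] := bij_ed Hp xI e0.
  exists d => // y yI xy; case: ifP => py; last exact: leey.
  have := Hd y yI xy; rewrite px0 sub0r normrN ger0_norm; last exact: ltW.
  move=> h; rewrite lee_fin.
  have : ln (phi y) <= a / 2 - M.
    by rewrite -[X in _ <= X]expRK ler_ln ?posrE ?expR_gt0 // ltW.
  lra.
Qed.

Lemma vth_cont : {within ext_half, continuous vth}.
Proof.
apply: ed_wEv.
- move=> e e0; have [d d0 Hd] := pa_ed HH I0 e0.
  pose d' := Num.min d 1 / 2.
  have d'0 : 0 < d' by rewrite divr_gt0 // lt_min d0 ltr01.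
  have d'd : d' < d.
    rewrite /d' ltr_pdivrMr // (@le_lt_trans _ _ d) ?ge_min ?lexx //.
    by rewrite ltr_pMr // ltr1n.
  exists (a - ln d') => v; case: v => [r| |] //= v0 hv.
  + apply: Hd; first exact: g_I.
    rewrite sub0r normrN ger0_norm; last exact: I_ge0 (g_I r).
    apply: le_lt_trans d'd; rewrite /g ge_min; apply/orP; right.
    rewrite -[X in _ <= X]lnK ?posrE // ler_expR; rewrite lte_fin in hv; lra.
  + by rewrite subrr normr0.
- move=> r r0 e e0; have [d1 d10 H1] := pa_ed HH (g_I r) e0.
  have [d d0 Hd] := exp_ed (a - r) d10.
  exists d => // s s0 rs; apply: H1; first exact: g_I.
  apply: le_lt_trans (min1_lip _ _) _; apply: Hd.
  have -> : a - r - (a - s) = - (r - s) by ring.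
  by rewrite normrN.
Qed.

Lemma th_sum O : (forall x y, x \in I -> y \in I -> O x y = H (phi x * phi y)) ->
  forall x y, x \in I -> y \in I -> O x y = vth (th x + th y)%E.
Proof.
move=> HO x y xI yI; rewrite HO //.
have hx := I_ge0 (pI xI); have hy := I_ge0 (pI yI).
rewrite /th; case: ifP => px; case: ifP => py /=.
  rewrite /g; congr H.
  have -> : a - (a / 2 - ln (phi x) + (a / 2 - ln (phi y))) = ln (phi x) + ln (phi y).
    by field.
  rewrite -lnM ?posrE // lnK ?posrE ?mulr_gt0 //.
  by symmetry; apply/min_idPr; rewrite mulr_ile1 ?I_le1 ?pI.
- have -> : phi y = 0 by apply/eqP; rewrite eq_le hy andbT leNgt py.
  by rewrite mulr0.
- have -> : phi x = 0 by apply/eqP; rewrite eq_le hx andbT leNgt px.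
  by rewrite mul0r.
- have -> : phi x = 0 by apply/eqP; rewrite eq_le hx andbT leNgt px.
  by rewrite mul0r.
Qed.

End Q1.

Lemma three_one {R : realType} (a : R) (ha : 0 <= a) (O : R -> R -> R) :
   (exists (phi : R -> R) (H : R -> R),
      incr_bij01 phi /\ pseudo_automorphism H /\
      (forall x y, x \in `[0, 1] -> y \in `[0, 1] -> O x y = H (phi x * phi y))) ->
   (exists (theta : R -> \bar R) (vtheta : \bar R -> R),
      (forall x, x \in `[0, 1] -> (0 <= theta x)%E) /\
      {within unit_I, continuous theta} /\
      (forall x y, x \in `[0, 1] -> y \in `[0, 1] -> x < y ->
         (theta y < theta x)%E) /\
      (forall u, (0 <= u)%E -> vtheta u \in `[0, 1]) /\
      {within ext_half, continuous vtheta} /\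
      (forall u v, (0 <= u)%E -> (0 <= v)%E -> (u <= v)%E ->
         vtheta v <= vtheta u) /\
      (forall x y, x \in `[0, 1] -> y \in `[0, 1] ->
         O x y = vtheta (theta x + theta y)%E) /\
      overlap O /\
      ((forall x, x \in `[0, 1] -> (theta x = (a / 2)%:E <-> x = 1)) \/
       (forall u, (0 <= u)%E -> (vtheta u = 1 <-> (u <= a%:E)%E)))).
Proof.
move=> [phi [H [Hp [HH HO]]]].
exists (th a phi), (vth a H).
split; first exact: th_ge0.
split; first exact: th_cont.
split; first exact: th_strict.
split; first exact: vth_I.
split; first exact: vth_cont.
split; first exact: vth_dec.
split; first exact: th_sum.
split; first exact: three_overlap HO.
by left; exact: th_a.
Qed.

Section O1.
Context {R : realType}.
Local Notation I := (`[0, 1] : interval R).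
Variable O : R -> R -> R.
Hypothesis Hov : overlap O.

Lemma ov_in x y : x \in I -> y \in I -> O x y \in I.
Proof. by case: Hov => h _; exact: h. Qed.
Lemma ov_0 x y : x \in I -> y \in I -> (O x y = 0 <-> x * y = 0).
Proof. by case: Hov => _ [_ [h _]]; exact: h. Qed.
Lemma ov_1 x y : x \in I -> y \in I -> (O x y = 1 <-> x * y = 1).
Proof. by case: Hov => _ [_ [_ [h _]]]; exact: h. Qed.
Lemma ov_monol x x' y : x \in I -> x' \in I -> y \in I -> x <= x' -> O x y <= O x' y.
Proof. by case: Hov => _ [_ [_ [_ [h _]]]] *; have [] := h x x' y. Qed.
Lemma ov_ed x y : x \in I -> y \in I -> forall e, 0 < e -> exists2 d, 0 < d &
  forall u v, u \in I -> v \in I -> `|x - u| < d -> `|y - v| < d -> `|O x y - O u v| < e.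
Proof.
move=> xI yI e e0; case: Hov => _ [_ [_ [_ [_ Hc]]]].
have := wR2_ed Hc (x := (x, y)) (conj xI yI) e0.
move=> [d d0 Hd]; exists d => // u v uI vI xu yv.
exact: (Hd (u, v)).
Qed.

Lemma small_pos (d : R) : 0 < d -> exists y, [/\ y \in I, 0 < y & y < d].
Proof.
move=> d0; pose m := Num.min d 1.
have m0 : 0 < m by rewrite lt_min d0 ltr01.
have md : m <= d by rewrite ge_min lexx.
have m1 : m <= 1 by rewrite ge_min lexx orbT.
exists (m / 2); split.
- apply: I_in; first by rewrite divr_ge0 // ltW.
  apply: le_trans m1; rewrite ler_pdivrMr // ler_pMr // ler1n //.
- by rewrite divr_gt0.
- apply: lt_le_trans md; rewrite ltr_pdivrMr // ltr_pMr // ltr1n //.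
Qed.

Variable theta : R -> \bar R.
Variable vtheta : \bar R -> R.
Hypothesis Hth0 : forall x, x \in `[0, 1] -> (0 <= theta x)%E.
Hypothesis Hthc : {within unit_I, continuous theta}.
Hypothesis Hths : forall x y, x \in `[0, 1] -> y \in `[0, 1] -> x < y -> (theta y < theta x)%E.
Hypothesis Hv : forall u, (0 <= u)%E -> vtheta u \in `[0, 1].
Hypothesis Hvd : forall u v, (0 <= u)%E -> (0 <= v)%E -> (u <= v)%E -> vtheta v <= vtheta u.
Hypothesis HO : forall x y, x \in `[0, 1] -> y \in `[0, 1] -> O x y = vtheta (theta x + theta y)%E.

Lemma th_fin x : x \in I -> 0 < x -> theta x \is a fin_num.
Proof.
move=> xI x0; rewrite fin_numE; apply/andP; split.
  by apply: contraTN (Hth0 xI) => /eqP ->.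
by apply: contraTN (Hths I0 xI x0) => /eqP ->; rewrite ltNge leey.
Qed.

Definition F x := fine (theta x).
Definition t1 := F 1.

Lemma thF x : x \in I -> 0 < x -> theta x = (F x)%:E.
Proof. by move=> xI x0; rewrite /F fineK // th_fin. Qed.

Lemma F_ge0 x : x \in I -> 0 < x -> 0 <= F x.
Proof. by move=> xI x0; rewrite -lee_fin -thF //; exact: Hth0. Qed.

Lemma F_lt x y : x \in I -> y \in I -> 0 < x -> x < y -> F y < F x.
Proof.
move=> xI yI x0 xy; have y0 : 0 < y by apply: lt_trans xy.
by rewrite -lte_fin -!thF //; apply: Hths.
Qed.

Lemma F_le1 x : x \in I -> 0 < x -> t1 <= F x.
Proof.
move=> xI x0; have := I_le1 xI; rewrite le_eqVlt => /orP [/eqP ->|x1]; first by [].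
by apply: ltW; apply: F_lt => //; exact: I1.
Qed.

Lemma th0_inf : theta 0 = +oo%E.
Proof.
case E: (theta 0) => [b| |] //; last by have := Hth0 I0; rewrite E.
exfalso.
have tb : t1 < b by rewrite -lte_fin -E /t1 -thF ?ltr01 //; [apply: Hths; rewrite ?ltr01 //; [exact: I0|exact: I1]|exact: I1].
have t10 : 0 <= t1 := F_ge0 I1 ltr01.
have e0 : 0 < (b - t1) / 2 by rewrite divr_gt0 // subr_gt0.
have [d d0 Hd] := wE_fin Hthc I0 E e0.
have [y [yI y0 yd]] := small_pos d0.
have [s hs bs] := Hd y yI (ltac:(rewrite sub0r normrN ger0_norm ?I_ge0 //)).
have O10 : O 1 0 = 0 by apply/(ov_0 I1 I0); rewrite mulr0.
have Oyy : O y y <= 0.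
  rewrite -O10 !HO ?I0 ?I1 // hs E (thF I1 ltr01) -!EFinD.
  by apply: Hvd; rewrite ?lee_fin; move: bs; rewrite ltr_distlC => /andP [h1 h2];
    rewrite /t1 in tb t10 h1 h2; lra.
have : O y y = 0.
  by apply/eqP; rewrite eq_le Oyy; exact: I_ge0 (ov_in yI yI).
move/(ov_0 yI yI) => /eqP; rewrite mulf_eq0 orbb => /eqP y00.
by move: y0; rewrite y00 ltxx.
Qed.

Lemma F_surj v : t1 <= v -> exists x, [/\ x \in I, 0 < x & F x = v].
Proof.
move=> tv.
have [d d0 Hd] := wE_inf Hthc I0 th0_inf (v + 1).
have [x0 [x0I x00 x0d]] := small_pos d0.
have Fx0 : v + 1 <= F x0.
  rewrite -lee_fin -thF //; apply: Hd => //.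
  by rewrite sub0r normrN ger0_norm // ltW.
have x01 : x0 <= 1 := I_le1 x0I.
have sub : forall y, y \in `[x0, 1] -> y \in I /\ 0 < y.
  move=> y; rewrite in_itv /= => /andP [h1 h2]; split.
    by apply: I_in => //; apply: le_trans h1; exact: ltW.
  exact: lt_le_trans h1.
have Fc : {within `[x0, 1], continuous F}.
  apply: ed_wR => x /= xI' e e0.
  have [xI x0'] := sub x xI'.
  have [d' d'0 Hd'] := wE_fin Hthc xI (thF xI x0') e0.
  exists d' => // y /= yI' xy.
  have [yI y0] := sub y yI'.
  have [s hs hl] := Hd' y yI xy.
  by rewrite /F hs.
have [c cI Fcv] := IVT x01 Fc (v := v) (ltac:(
  rewrite ge_min le_max; apply/andP; split; apply/orP; [right | left]; rewrite -/t1 //; lra)).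
have [cI' c0] := sub c cI.
by exists c.
Qed.

Definition phiO x := if 0 < x then expR (t1 - F x) else 0.

Lemma phiO_bij : incr_bij01 phiO.
Proof.
split; [|split].
- move=> x xI; rewrite /phiO; case: ifP => x0; last exact: I0.
  apply: I_in; first exact: expR_ge0.
  by rewrite expR_le1 subr_le0 F_le1.
- move=> x y xI yI xy; rewrite /phiO.
  have y0 : 0 < y by apply: le_lt_trans xy; exact: I_ge0.
  rewrite y0; case: ifP => x0; last exact: expR_gt0.
  by rewrite ltr_expR ltrD2l ltrN2 F_lt.
- move=> z zI; have := I_ge0 zI; rewrite le_eqVlt => /orP [/eqP <-|z0].
    by exists 0; [exact: I0 | rewrite /phiO ltxx].
  have hv : t1 <= t1 - ln z.
    by rewrite lerDl oppr_ge0; apply: ln_le0; exact: I_le1.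
  have [x [xI x0 Fx]] := F_surj hv.
  exists x => //; rewrite /phiO x0 Fx.
  by rewrite opprB addrC subrK lnK.
Qed.

Lemma phiO_pos x : x \in I -> (0 < phiO x) = (0 < x).
Proof. by move=> xI; rewrite /phiO; case: ifP => x0; rewrite ?ltxx ?expR_gt0. Qed.

Definition HO_ s := O (inv01 phiO s) 1.

Lemma HO_id x y : x \in I -> y \in I -> O x y = HO_ (phiO x * phiO y).
Proof.
move=> xI yI.
have Hp := phiO_bij.
have pI : forall x, x \in I -> phiO x \in I by case: Hp.
have pxy := mulI (pI _ xI) (pI _ yI).
have [zI pz] := inv01P Hp pxy.
set z := inv01 phiO _ in zI pz *.
rewrite /HO_ -/z.
case: (I_0_or_pos xI) => [x00|x0].
  have -> : O x y = 0 by apply/(ov_0 xI yI); rewrite x00 mul0r.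
  have z0 : z = 0.
    by apply/(phi_eq0 Hp) => //; rewrite pz x00 (bij0 Hp) mul0r.
  by symmetry; apply/(ov_0 zI I1); rewrite z0 mul0r.
case: (I_0_or_pos yI) => [y00|y0].
  have -> : O x y = 0 by apply/(ov_0 xI yI); rewrite y00 mulr0.
  have z0 : z = 0.
    by apply/(phi_eq0 Hp) => //; rewrite pz y00 (bij0 Hp) mulr0.
  by symmetry; apply/(ov_0 zI I1); rewrite z0 mul0r.
have z0 : 0 < z.
  by rewrite -(phiO_pos zI) pz mulr_gt0 // phiO_pos.
rewrite !HO ?I1 // (thF xI x0) (thF yI y0) (thF zI z0) (thF I1 ltr01) -!EFinD.
congr vtheta; congr EFin.
move: pz; rewrite /phiO x0 y0 z0 -expRD => /expR_inj.
rewrite /t1; lra.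
Qed.

Lemma HO_pa : pseudo_automorphism HO_.
Proof.
have Hp := phiO_bij; have Hi := inv01_bij Hp.
have iI : forall s, s \in I -> inv01 phiO s \in I by case: Hi.
split; [|split; [|split; [|split]]].
- by move=> s sI; apply: ov_in => //; [exact: iI | exact: I1].
- apply: ed_wR => s /= sI e e0.
  have [d1 d10 H1] := ov_ed (iI _ sI) I1 e0.
  have [d d0 Hd] := bij_ed Hi sI d10.
  exists d => // t /= tI st; apply: H1; [exact: iI | exact: I1 | exact: Hd |].
  by rewrite subrr normr0.
- move=> s t sI tI st; apply: ov_monol; rewrite ?iI ?I1 //.
  by rewrite (bij_le Hi).
- move=> s sI; rewrite /HO_ ov_1 ?iI ?I1 // mulr1.
  split => [h|->]; last by rewrite -{1}(bij1 Hp) inv01K //; exact: I1.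
  by rewrite -(inv01_phi Hp sI) h (bij1 Hp).
- move=> s sI; rewrite /HO_ ov_0 ?iI ?I1 // mulr1.
  split => [h|->]; last by rewrite -{1}(bij0 Hp) inv01K //; exact: I0.
  by rewrite -(inv01_phi Hp sI) h (bij0 Hp).
Qed.

End O1.

Unset Implicit Arguments. Set Strict Implicit.

Theorem theorem5p1 (R : realType) (a : R) (ha : 0 <= a) (O : R -> R -> R) :
  [<->
   (* (1) *)
   (exists (theta : R -> \bar R) (vtheta : \bar R -> R),
      (forall x, x \in `[0, 1] -> (0 <= theta x)%E) /\
      {within unit_I, continuous theta} /\
      (forall x y, x \in `[0, 1] -> y \in `[0, 1] -> x < y ->
         (theta y < theta x)%E) /\
      (forall u, (0 <= u)%E -> vtheta u \in `[0, 1]) /\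
      {within ext_half, continuous vtheta} /\
      (forall u v, (0 <= u)%E -> (0 <= v)%E -> (u <= v)%E ->
         vtheta v <= vtheta u) /\
      (forall x y, x \in `[0, 1] -> y \in `[0, 1] ->
         O x y = vtheta (theta x + theta y)%E) /\
      overlap O /\
      ((forall x, x \in `[0, 1] -> (theta x = (a / 2)%:E <-> x = 1)) \/
       (forall u, (0 <= u)%E -> (vtheta u = 1 <-> (u <= a%:E)%E))));
   (* (2) *)
   (overlap O /\
    exists (F : R -> R) (T : R -> R -> R),
      pseudo_automorphism F /\ strict_tnorm T /\
      (forall x y, x \in `[0, 1] -> y \in `[0, 1] -> O x y = F (T x y)));
   (* (3) *)
   (exists (phi : R -> R) (H : R -> R),
      incr_bij01 phi /\ pseudo_automorphism H /\
      (forall x y, x \in `[0, 1] -> y \in `[0, 1] -> O x y = H (phi x * phi y)))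
  ].
Proof.
tfae.
- move=> [theta [vtheta [h1 [h2 [h3 [h4 [h5 [h6 [h7 [h8 h9]]]]]]]]]].
  split => //.
  have Hp : incr_bij01 (phiO theta) by apply: phiO_bij; eassumption.
  have HH : pseudo_automorphism (HO_ O theta) by apply: HO_pa; eassumption.
  apply: (three_two Hp HH).
  by move=> x y xI yI; apply: HO_id; eassumption.
- exact: two_three.
- exact: three_one.
Qed.
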